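(* For every set of formulas $\Gamma$ and formula $\varphi$: (1) $\Gamma\vdash_{\mathsf{NeL}^1}\varphi$ iff $\Gamma\models_{\mathfrak{N}_w^1}\varphi$; (2) $\Gamma\vdash_{\mathsf{NeL}^{\mathrm{as},1}}\varphi$ iff $\Gamma\models_{\mathfrak{N}^1}\varphi$.
   Context: Formulas are built from a countably infinite set of variables using binary $\otimes,\circ$ and unary ${}^{*}$; $\mathbf{Fm}$ is the formula algebra. Abbreviations (also term operations): $\varphi\Rightarrow\psi:=(\varphi\circ\psi^{*})^{*}$; $\varphi\Leftrightarrow\psi:=(\varphi\Rightarrow\psi)\otimes(\psi\Rightarrow\varphi)$; $\varphi\not\Leftrightarrow\psi:=(\varphi\Leftrightarrow\psi)^{*}$; $\varphi\not\Leftrightarrow\psi\not\Leftrightarrow\chi:=((\varphi\not\Leftrightarrow\psi)\otimes(\varphi\not\Leftrightarrow\chi))\otimes(\psi\not\Leftrightarrow\chi)$; $\varphi\oplus\psi:=(\varphi^{*}\otimes\psi^{*})^{*}$. $\mathsf{NeL}$: axiom schemes (A1) $\varphi\Rightarrow\varphi$; (A2) $(\varphi\circ\psi)\Rightarrow(\psi\circ\varphi)$; (A3) $\varphi\Rightarrow\varphi^{**}$; (A4) $(\varphi\Rightarrow\psi)\Rightarrow(\varphi\circ\psi)$; (A5) $(\varphi\otimes\psi)\Leftrightarrow(\psi\otimes\varphi)$; (A6) $((\varphi\otimes\psi)\Rightarrow\chi)\Rightarrow((\varphi\otimes\chi^{*})\Rightarrow\psi^{*})$; (A7) $(\varphi\not\Leftrightarrow\psi\not\Leftrightarrow\chi)\Rightarrow((\varphi\Rightarrow\psi)\Rightarrow((\psi\Rightarrow\chi)\Rightarrow(\varphi\Rightarrow\chi)))$;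 rules on arbitrary formulas: $\varphi\Rightarrow\psi,\varphi/\psi$; $\varphi,\psi/\varphi\otimes\psi$; $\varphi\Leftrightarrow\psi,\chi/\chi'$ ($\chi'$ from $\chi$ replacing one or more occurrences of $\varphi$ by $\psi$); $\varphi\otimes\psi/\varphi$. $\mathsf{NeL}^1$ is $\mathsf{NeL}$ plus the rules $\varphi/\varphi\oplus\psi$ and (A8) $\varphi\Rightarrow\psi,\psi\Rightarrow\chi/\varphi\Rightarrow\chi$; $\mathsf{NeL}^{\mathrm{as},1}$ is $\mathsf{NeL}^1$ plus the axiom schemes $(\varphi\otimes\psi)\otimes\chi\Rightarrow\varphi\otimes(\psi\otimes\chi)$ and $\varphi\otimes(\psi\otimes\chi)\Rightarrow(\varphi\otimes\psi)\otimes\chi$. A weak $\mathcal{N}$-algebra is an algebra $(A,\otimes,\circ,{}^{*})$ of type $(2,2,1)$ with $\otimes,\circ$ commutative, $x^{**}=x$, $(x\otimes y)\circ z=(x\otimes z)\circ y$; an $\mathcal{N}$-algebra has in addition $\otimes$ associative. With $\mathsf{t}\ne\mathsf{f}$ symbols not in $A$, $\overline A=A\cup\{\mathsf{t},\mathsf{f}\}$, an $\mathfrak{N}_w$-model is $(\mathbf A,\perp,\{\mathsf{t},\mathsf{f}\})$, $\mathbf A$ a weak $\mathcal{N}$-algebra, $\perp\subseteq\overline A\times\overline A$, such that for all $x,y,z\in A$: (a) $x\perp x^{*}$; (b) $x\perp y^{*}$ and $y\perp x^{*}$ imply $x=y$; (c) $x\perp y$ iff $x\circ y\perp\mathsf{t}$;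 (d) $x\perp\mathsf{t}$ iff $x^{*}\perp\mathsf{f}$; (e) $x\perp\mathsf{f}$ and $y\perp\mathsf{f}$ iff $x\otimes y\perp\mathsf{f}$; (f) $(x\circ y^{*})^{*}\perp(x\circ y)^{*}$; (g) $x\perp y$ and $x\perp\mathsf{f}$ imply $y\perp\mathsf{t}$; (h) $(x\not\Leftrightarrow y\not\Leftrightarrow z)\perp((x\Rightarrow y)\Rightarrow((y\Rightarrow z)\Rightarrow(x\Rightarrow z)))^{*}$. $\mathfrak{N}_w^1$ is the class of $\mathfrak{N}_w$-models satisfying, for all $x,y,z\in A$: $x\perp\mathsf{f}$ implies $x\oplus y\perp\mathsf{f}$; and $x\perp y^{*}$, $y\perp z^{*}$ imply $x\perp z^{*}$. $\mathfrak{N}^1$ is the subclass of those with $\mathbf A$ an $\mathcal{N}$-algebra. $F_\perp=\{a\in A:a\perp\mathsf{f}\}$. For a class $K$, $\Gamma\models_K\varphi$ iff there is a finite $\Gamma'\subseteq\Gamma$ such that for all models in $K$ and homomorphisms $h:\mathbf{Fm}\to\mathbf A$, $h(\Gamma')\subseteq F_\perp$ implies $h(\varphi)\in F_\perp$. *)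

(* Defs.v *)
From Stdlib Require Import List.
Import ListNotations.

Inductive fm : Type :=
| Var : nat -> fm
| Ot : fm -> fm -> fm        (* ⊗ *)
| Oc : fm -> fm -> fm        (* ∘ *)
| St : fm -> fm.             (* ^* *)

Definition fImp (a b : fm) : fm := St (Oc a (St b)).
Definition fIff (a b : fm) : fm := Ot (fImp a b) (fImp b a).
Definition fNiff (a b : fm) : fm := St (fIff a b).
Definition fNe3 (a b c : fm) : fm := Ot (Ot (fNiff a b) (fNiff a c)) (fNiff b c).
Definition fOplus (a b : fm) : fm := St (Ot (St a) (St b)).

(** [repl1 p q c c'] : c' is obtained from c by replacing one or more
    occurrences of p by q. *)
Inductive repl1 (p q : fm) : fm -> fm -> Prop :=
| repl_here : repl1 p q p q
| repl_Ot : forall a a' b b',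
    (a = a' \/ repl1 p q a a') -> (b = b' \/ repl1 p q b b') ->
    (repl1 p q a a' \/ repl1 p q b b') -> repl1 p q (Ot a b) (Ot a' b')
| repl_Oc : forall a a' b b',
    (a = a' \/ repl1 p q a a') -> (b = b' \/ repl1 p q b b') ->
    (repl1 p q a a' \/ repl1 p q b b') -> repl1 p q (Oc a b) (Oc a' b')
| repl_St : forall a a', repl1 p q a a' -> repl1 p q (St a) (St a').

(** * Derivability.
    [derivable false] is NeL^1, [derivable true] is NeL^{as,1}. *)
Inductive derivable (as_ : bool) (G : fm -> Prop) : fm -> Prop :=
| d_hyp : forall a, G a -> derivable as_ G a
| d_A1 : forall a, derivable as_ G (fImp a a)
| d_A2 : forall a b, derivable as_ G (fImp (Oc a b) (Oc b a))
| d_A3 : forall a, derivable as_ G (fImp a (St (St a)))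
| d_A4 : forall a b, derivable as_ G (fImp (fImp a b) (Oc a b))
| d_A5 : forall a b, derivable as_ G (fIff (Ot a b) (Ot b a))
| d_A6 : forall a b c,
    derivable as_ G (fImp (fImp (Ot a b) c) (fImp (Ot a (St c)) (St b)))
| d_A7 : forall a b c,
    derivable as_ G (fImp (fNe3 a b c)
                          (fImp (fImp a b) (fImp (fImp b c) (fImp a c))))
| d_MP : forall a b, derivable as_ G (fImp a b) -> derivable as_ G a ->
    derivable as_ G b
| d_adj : forall a b, derivable as_ G a -> derivable as_ G b ->
    derivable as_ G (Ot a b)
| d_repl : forall a b c c', derivable as_ G (fIff a b) -> derivable as_ G c ->
    repl1 a b c c' -> derivable as_ G c'
| d_proj : forall a b, derivable as_ G (Ot a b) -> derivable as_ G a
| d_oplus : forall a b, derivable as_ G a -> derivable as_ G (fOplus a b)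
| d_A8 : forall a b c, derivable as_ G (fImp a b) -> derivable as_ G (fImp b c) ->
    derivable as_ G (fImp a c)
| d_as1 : forall a b c, as_ = true ->
    derivable as_ G (fImp (Ot (Ot a b) c) (Ot a (Ot b c)))
| d_as2 : forall a b c, as_ = true ->
    derivable as_ G (fImp (Ot a (Ot b c)) (Ot (Ot a b) c)).

Inductive ext (A : Type) : Type :=
| Elt : A -> ext A
| Tt : ext A
| Ff : ext A.
Arguments Elt {A} _.
Arguments Tt {A}.
Arguments Ff {A}.

(** Structures (A, ⊗, ∘, *, ⊥) ; the axioms are stated as predicates below. *)
Record structure : Type := {
  car : Type;
  mot : car -> car -> car;
  moc : car -> car -> car;
  mst : car -> car;
  mperp : ext car -> ext car -> Prop }.

Section Ops.
Variable M : structure.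
Definition mImp (x y : car M) : car M := mst M (moc M x (mst M y)).
Definition mIff (x y : car M) : car M := mot M (mImp x y) (mImp y x).
Definition mNiff (x y : car M) : car M := mst M (mIff x y).
Definition mNe3 (x y z : car M) : car M :=
  mot M (mot M (mNiff x y) (mNiff x z)) (mNiff y z).
Definition mOplus (x y : car M) : car M := mst M (mot M (mst M x) (mst M y)).
Definition pp (x y : car M) : Prop := mperp M (Elt x) (Elt y).

Definition weak_N_algebra : Prop :=
  (forall x y, mot M x y = mot M y x) /\
  (forall x y, moc M x y = moc M y x) /\
  (forall x, mst M (mst M x) = x) /\
  (forall x y z, moc M (mot M x y) z = moc M (mot M x z) y).

Definition N_algebra : Prop :=
  weak_N_algebra /\ (forall x y z, mot M (mot M x y) z = mot M x (mot M y z)).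

Definition Nw_model : Prop :=
  weak_N_algebra /\
  (forall x, pp x (mst M x)) /\
  (forall x y, pp x (mst M y) -> pp y (mst M x) -> x = y) /\
  (forall x y, pp x y <-> mperp M (Elt (moc M x y)) Tt) /\
  (forall x, mperp M (Elt x) Tt <-> mperp M (Elt (mst M x)) Ff) /\
  (forall x y, (mperp M (Elt x) Ff /\ mperp M (Elt y) Ff) <->
               mperp M (Elt (mot M x y)) Ff) /\
  (forall x y, pp (mst M (moc M x (mst M y))) (mst M (moc M x y))) /\
  (forall x y, pp x y -> mperp M (Elt x) Ff -> mperp M (Elt y) Tt) /\
  (forall x y z, pp (mNe3 x y z)
     (mst M (mImp (mImp x y) (mImp (mImp y z) (mImp x z))))).

Definition Nw1_model : Prop :=
  Nw_model /\
  (forall x y, mperp M (Elt x) Ff -> mperp M (Elt (mOplus x y)) Ff) /\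
  (forall x y z, pp x (mst M y) -> pp y (mst M z) -> pp x (mst M z)).

Definition N1_model : Prop := Nw1_model /\ N_algebra.

Definition F_perp (a : car M) : Prop := mperp M (Elt a) Ff.

Definition is_hom (h : fm -> car M) : Prop :=
  (forall a b, h (Ot a b) = mot M (h a) (h b)) /\
  (forall a b, h (Oc a b) = moc M (h a) (h b)) /\
  (forall a, h (St a) = mst M (h a)).
End Ops.

Definition consequence (K : structure -> Prop) (G : fm -> Prop) (phi : fm) : Prop :=
  exists L : list fm, (forall a, In a L -> G a) /\
    forall M : structure, K M -> forall h : fm -> car M, is_hom M h ->
      (forall a, In a L -> F_perp M (h a)) -> F_perp M (h phi).

(* Main.v *)
Require Import Defs.
From Stdlib Require Import List Setoid Morphisms ProofIrrelevance FunctionalExtensionality PropExtensionality IndefiniteDescription.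

Section Synt.
Variable as_ : bool.
Variable G : fm -> Prop.
Notation D := (derivable as_ G).

Lemma rOl p q a a' b : repl1 p q a a' -> repl1 p q (Ot a b) (Ot a' b).
Proof. intro H. apply repl_Ot; auto. Qed.
Lemma rOr p q a b b' : repl1 p q b b' -> repl1 p q (Ot a b) (Ot a b').
Proof. intro H. apply repl_Ot; auto. Qed.
Lemma rCl p q a a' b : repl1 p q a a' -> repl1 p q (Oc a b) (Oc a' b).
Proof. intro H. apply repl_Oc; auto. Qed.
Lemma rCr p q a b b' : repl1 p q b b' -> repl1 p q (Oc a b) (Oc a b').
Proof. intro H. apply repl_Oc; auto. Qed.

Lemma iff_right p q X Y Y' : D (fIff p q) -> repl1 p q Y Y' -> D (fIff X Y) -> D (fIff X Y').
Proof.
  intros Hpq r H. eapply d_repl; [exact Hpq| exact H|].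
  unfold fIff, fImp. apply repl_Ot; right.
  - apply repl_St, rCr, repl_St, r.
  - apply repl_St, rCl, r.
  - apply repl_St, rCl, r.
Qed.

Lemma transfer a b : D (fIff a b) -> D a -> D b.
Proof. intros H1 H2. exact (d_repl _ _ a b a b H1 H2 (repl_here a b)). Qed.

Definition eqv a b := D (fIff a b).

Lemma eqv_refl a : eqv a a.
Proof. apply d_adj; apply d_A1. Qed.
Lemma eqv_sym a b : eqv a b -> eqv b a.
Proof. intro H. eapply transfer; [apply d_A5| exact H]. Qed.
Lemma eqv_trans a b c : eqv a b -> eqv b c -> eqv a c.
Proof. intros H1 H2. exact (iff_right _ _ _ _ _ H2 (repl_here b c) H1). Qed.

Global Instance eqv_Equiv : Equivalence eqv.
Proof. split; [exact eqv_refl|exact eqv_sym|exact eqv_trans]. Qed.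

Global Instance Ot_Proper : Proper (eqv ==> eqv ==> eqv) Ot.
Proof.
  intros a a' Ha b b' Hb.
  apply (iff_right _ _ _ _ _ Hb (rOr _ _ a' _ _ (repl_here b b'))).
  apply (iff_right _ _ _ _ _ Ha (rOl _ _ _ _ b (repl_here a a'))).
  apply eqv_refl.
Qed.
Global Instance Oc_Proper : Proper (eqv ==> eqv ==> eqv) Oc.
Proof.
  intros a a' Ha b b' Hb.
  apply (iff_right _ _ _ _ _ Hb (rCr _ _ a' _ _ (repl_here b b'))).
  apply (iff_right _ _ _ _ _ Ha (rCl _ _ _ _ b (repl_here a a'))).
  apply eqv_refl.
Qed.
Global Instance St_Proper : Proper (eqv ==> eqv) St.
Proof.
  intros a a' Ha.
  apply (iff_right _ _ _ _ _ Ha (repl_St _ _ _ _ (repl_here a a'))).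
  apply eqv_refl.
Qed.
Global Instance D_Proper : Proper (eqv ==> iff) D.
Proof.
  intros a b H. split; apply transfer; [exact H| apply eqv_sym; exact H].
Qed.

Lemma ocC x y : eqv (Oc x y) (Oc y x).
Proof. apply d_adj; apply d_A2. Qed.
Lemma otC x y : eqv (Ot x y) (Ot y x).
Proof. apply d_A5. Qed.

Lemma dne a : eqv (St (St a)) a.
Proof.
  unfold eqv, fIff. apply d_adj; [|apply d_A3].
  pose proof (d_A1 as_ G (St a)) as H. unfold fImp in *.
  rewrite (ocC (St a) (St (St a))) in H. exact H.
Qed.

Lemma ex4h a b c : D (fImp (St (Oc (Ot a b) c)) (St (Oc (Ot a c) b))).
Proof.
  pose proof (d_A6 as_ G a b (St c)) as H. unfold fImp in *.
  rewrite !dne in H. rewrite !dne. exact H.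
Qed.

Lemma ex4 a b c : eqv (Oc (Ot a b) c) (Oc (Ot a c) b).
Proof.
  assert (H : eqv (St (Oc (Ot a b) c)) (St (Oc (Ot a c) b)))
    by (apply d_adj; apply ex4h).
  rewrite <- (dne (Oc (Ot a b) c)), <- (dne (Oc (Ot a c) b)), H. reflexivity.
Qed.

Lemma proj2' a b : D (Ot a b) -> D b.
Proof. intro H. rewrite otC in H. exact (d_proj _ _ _ _ H). Qed.

Lemma imp_st a b : D (fImp a (St b)) <-> D (St (Oc a b)).
Proof. unfold fImp. rewrite dne. reflexivity. Qed.
End Synt.

Section Lind.
Variable as_ : bool.
Variable G : fm -> Prop.
Notation D := (derivable as_ G).
Notation eqv := (eqv as_ G).

Definition clsP (a : fm) : fm -> Prop := fun c => eqv c a.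
Definition carrier : Type := {P : fm -> Prop | exists a, P = clsP a}.
Definition cls (a : fm) : carrier := exist _ (clsP a) (ex_intro _ a eq_refl).
Definition rep (x : carrier) : fm :=
  proj1_sig (constructive_indefinite_description _ (proj2_sig x)).

Lemma repK x : cls (rep x) = x.
Proof.
  unfold rep. destruct (constructive_indefinite_description _ (proj2_sig x)) as [a Ha].
  simpl. destruct x as [P HP]. simpl in Ha. subst P. unfold cls.
  f_equal. apply proof_irrelevance.
Qed.

Lemma clsE a b : cls a = cls b <-> eqv a b.
Proof.
  split.
  - intro H. apply (f_equal (@proj1_sig _ _)) in H. simpl in H.
    assert (clsP a a) by (unfold clsP; reflexivity). rewrite H in H0. exact H0.
  - intro H. unfold cls. 
    assert (E : clsP a = clsP b).
    { apply functional_extensionality; intro c. apply propositional_extensionality.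
      unfold clsP. rewrite H. reflexivity. }
    revert E. generalize (ex_intro (fun a0 => clsP a = clsP a0) a eq_refl).
    generalize (ex_intro (fun a0 => clsP b = clsP a0) b eq_refl).
    intros e1 e2 E. revert e2. rewrite E. intros e2. f_equal; apply proof_irrelevance.
Qed.

Lemma cls_rep a : eqv (rep (cls a)) a.
Proof. apply clsE. apply repK. Qed.

Lemma ext_eq x y : eqv (rep x) (rep y) -> x = y.
Proof. intro H. rewrite <- (repK x), <- (repK y). apply clsE, H. Qed.

Definition Lot x y := cls (Ot (rep x) (rep y)).
Definition Loc x y := cls (Oc (rep x) (rep y)).
Definition Lst x := cls (St (rep x)).
Definition lperp (u v : ext carrier) : Prop :=
  match u, v with
  | Elt x, Elt y => D (St (Oc (rep x) (rep y)))
  | Elt x, Tt => D (St (rep x))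
  | Elt x, Ff => D (rep x)
  | _, _ => False
  end.
Definition LM : structure := Build_structure carrier Lot Loc Lst lperp.

Lemma rLot x y : eqv (rep (Lot x y)) (Ot (rep x) (rep y)).
Proof. apply cls_rep. Qed.
Lemma rLoc x y : eqv (rep (Loc x y)) (Oc (rep x) (rep y)).
Proof. apply cls_rep. Qed.
Lemma rLst x : eqv (rep (Lst x)) (St (rep x)).
Proof. apply cls_rep. Qed.

Arguments rep : simpl never.
Arguments cls : simpl never.
Arguments Lot : simpl never.
Arguments Loc : simpl never.
Arguments Lst : simpl never.

Ltac nrm := repeat first [rewrite rLot in * | rewrite rLoc in * | rewrite rLst in *].

Lemma LM_weak : weak_N_algebra LM.
Proof.
  unfold weak_N_algebra; simpl; repeat split; intros; apply ext_eq; nrm.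
  - apply otC.
  - apply ocC.
  - apply dne.
  - apply ex4.
Qed.

Lemma LM_Nw : Nw_model LM.
Proof.
  split; [apply LM_weak|]. unfold pp, mNe3, mNiff, mIff, mImp; simpl.
  repeat split; intros; nrm.
  - apply d_A1.
  - apply ext_eq. apply d_adj; assumption.
  - exact H.
  - exact H.
  - exact H.
  - exact H.
  - apply d_adj; apply H.
  - exact (d_proj _ _ _ _ H).
  - exact (proj2' _ _ _ _ H).
  - apply d_A4.
  - rewrite <- (dne _ _ (rep y)) in H. exact (d_MP _ _ _ _ H H0).
  - exact (d_A7 _ _ (rep x) (rep y) (rep z)).
Qed.

Lemma LM_Nw1 : Nw1_model LM.
Proof.
  split; [apply LM_Nw|]. unfold pp, mOplus; simpl. split; intros; nrm.
  - exact (d_oplus _ _ _ _ H).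
  - exact (d_A8 _ _ _ _ _ H H0).
Qed.

Lemma LM_N1 : as_ = true -> N1_model LM.
Proof.
  intro Ha. split; [apply LM_Nw1|]. split; [apply LM_weak|].
  simpl; intros; apply ext_eq; nrm. apply d_adj; [apply d_as1|apply d_as2]; exact Ha.
Qed.

Lemma LM_hom : is_hom LM cls.
Proof.
  unfold is_hom; simpl; repeat split; intros; apply clsE; rewrite ?cls_rep; reflexivity.
Qed.

Lemma LM_F a : F_perp LM (cls a) <-> D a.
Proof. unfold F_perp; simpl. rewrite cls_rep. reflexivity. Qed.
End Lind.

Section Sem.
Variable M : structure.
Hypothesis HM : Nw1_model M.
Variable h : fm -> car M.
Hypothesis Hh : is_hom M h.

Notation F := (F_perp M).

Lemma hO a b : h (Ot a b) = mot M (h a) (h b). Proof. apply Hh. Qed.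
Lemma hC a b : h (Oc a b) = moc M (h a) (h b). Proof. apply Hh. Qed.
Lemma hS a : h (St a) = mst M (h a). Proof. apply Hh. Qed.
Lemma hImp a b : h (fImp a b) = mImp M (h a) (h b).
Proof. unfold fImp, mImp. rewrite hS, hC, hS. reflexivity. Qed.
Lemma hIff a b : h (fIff a b) = mIff M (h a) (h b).
Proof. unfold fIff, mIff. rewrite hO, !hImp. reflexivity. Qed.
Lemma hNe3 a b c : h (fNe3 a b c) = mNe3 M (h a) (h b) (h c).
Proof. unfold fNe3, mNe3, fNiff, mNiff. rewrite !hO, !hS, !hIff. reflexivity. Qed.
Lemma hOplus a b : h (fOplus a b) = mOplus M (h a) (h b).
Proof. unfold fOplus, mOplus. rewrite !hS, hO, !hS. reflexivity. Qed.

Lemma stst x : mst M (mst M x) = x.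
Proof. destruct HM as [[[_ [_ [H _]]] _] _]. apply H. Qed.

Lemma FImp x y : F (mImp M x y) <-> pp M x (mst M y).
Proof.
  destruct HM as [[Hw [Ha [Hb [Hc [Hd _]]]]] _].
  unfold F_perp, mImp. rewrite <- Hd, <- Hc. reflexivity.
Qed.

Lemma Fot x y : F (mot M x y) <-> F x /\ F y.
Proof. destruct HM as [[Hw [Ha [Hb [Hc [Hd [He _]]]]]] _]. unfold F_perp. rewrite He. reflexivity. Qed.

Lemma ppself x : pp M (mst M x) x.
Proof.
  destruct HM as [[Hw [Ha _]] _]. rewrite <- (stst x) at 2. apply Ha.
Qed.

Lemma Fiff_eq x y : F (mIff M x y) -> x = y.
Proof.
  unfold mIff. rewrite Fot, !FImp. intros [H1 H2].
  destruct HM as [[Hw [Ha [Hb _]]] _]. exact (Hb _ _ H1 H2).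
Qed.

Lemma Frefl x : pp M x (mst M x).
Proof. destruct HM as [[_ [H _]] _]. apply H. Qed.

Section Repl.
Variables p q : fm.
Hypothesis Hpq : h p = h q.
Fixpoint hrepl c c' (r : repl1 p q c c') {struct r} : h c = h c'.
Proof.
  destruct r as [| a a' b b' o1 o2 _ | a a' b b' o1 o2 _ | a a' r1].
  - exact Hpq.
  - rewrite !hO. f_equal.
    + destruct o1 as [e|r1]; [rewrite e; reflexivity| exact (hrepl _ _ r1)].
    + destruct o2 as [e|r1]; [rewrite e; reflexivity| exact (hrepl _ _ r1)].
  - rewrite !hC. f_equal.
    + destruct o1 as [e|r1]; [rewrite e; reflexivity| exact (hrepl _ _ r1)].
    + destruct o2 as [e|r1]; [rewrite e; reflexivity| exact (hrepl _ _ r1)].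
  - rewrite !hS. f_equal. exact (hrepl _ _ r1).
Defined.
End Repl.
End Sem.

Definition assocM (M : structure) : Prop :=
  forall x y z, mot M (mot M x y) z = mot M x (mot M y z).

Ltac nil_start := exists nil; split; [simpl; tauto|]; intros M HM Has h Hh _.

Lemma sound as_ G phi : derivable as_ G phi ->
  exists L, (forall a, In a L -> G a) /\
    forall M, Nw1_model M -> (as_ = true -> assocM M) -> forall h, is_hom M h ->
      (forall a, In a L -> F_perp M (h a)) -> F_perp M (h phi).
Proof.
  induction 1.
  - exists (a :: nil). split.
    + intros b [<-|[]]; assumption.
    + intros M HM Has h Hh HL. apply HL. left; reflexivity.
  - nil_start. rewrite hImp by exact Hh. apply FImp; [exact HM|]. apply Frefl, HM.
  - nil_start. rewrite hImp, !hC by exact Hh. apply FImp; [exact HM|].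
    destruct (HM) as [[[Hw1 [Hw2 _]] _] _]. rewrite Hw2. apply Frefl; exact HM.
  - nil_start. rewrite hImp, !hS by exact Hh. apply FImp; [exact HM|]. rewrite stst by exact HM.
    apply Frefl, HM.
  - nil_start. rewrite hImp, hImp, hC by exact Hh. apply FImp; [exact HM|]. apply HM.
  - nil_start. rewrite hIff, !hO by exact Hh. unfold mIff. apply Fot; [exact HM|]. split; apply FImp; try exact HM;
    destruct (HM) as [[[Hw1 _] _] _]; rewrite Hw1; apply Frefl; exact HM.
  - nil_start. rewrite !hImp, !hO, !hS by exact Hh. apply FImp; [exact HM|].
    unfold mImp. rewrite !stst by exact HM.
    destruct (HM) as [[[_ [_ [_ Hw4]]] _] _]. rewrite Hw4.
    apply ppself; exact HM.
  - nil_start. rewrite !hImp, hNe3 by exact Hh. apply FImp; [exact HM|]. apply HM.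
  - destruct IHderivable1 as [L1 [G1 S1]], IHderivable2 as [L2 [G2 S2]].
    exists (L1 ++ L2). split.
    + intros c Hc. apply in_app_or in Hc. destruct Hc; auto.
    + intros M HM Has h Hh HL.
      assert (A1 := S1 M HM Has h Hh (fun c Hc => HL c (in_or_app _ _ _ (or_introl Hc)))).
      assert (A2 := S2 M HM Has h Hh (fun c Hc => HL c (in_or_app _ _ _ (or_intror Hc)))).
      rewrite hImp in A1 by exact Hh. apply FImp in A1; [|exact HM].
      destruct (HM) as [[_ [_ [_ [_ [Hd [_ [_ [Hg _]]]]]]]] _].
      unfold F_perp in *.
      rewrite <- (stst M HM (h b)). apply Hd. exact (Hg _ _ A1 A2).
  - destruct IHderivable1 as [L1 [G1 S1]], IHderivable2 as [L2 [G2 S2]].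
    exists (L1 ++ L2). split.
    + intros c Hc. apply in_app_or in Hc. destruct Hc; auto.
    + intros M HM Has h Hh HL.
      assert (A1 := S1 M HM Has h Hh (fun c Hc => HL c (in_or_app _ _ _ (or_introl Hc)))).
      assert (A2 := S2 M HM Has h Hh (fun c Hc => HL c (in_or_app _ _ _ (or_intror Hc)))).
      rewrite hO by exact Hh. apply Fot; auto.
  - destruct IHderivable1 as [L1 [G1 S1]], IHderivable2 as [L2 [G2 S2]].
    exists (L1 ++ L2). split.
    + intros x Hx. apply in_app_or in Hx. destruct Hx; auto.
    + intros M HM Has h Hh HL.
      assert (A1 := S1 M HM Has h Hh (fun x Hx => HL x (in_or_app _ _ _ (or_introl Hx)))).
      assert (A2 := S2 M HM Has h Hh (fun x Hx => HL x (in_or_app _ _ _ (or_intror Hx)))).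
      rewrite hIff in A1 by exact Hh. apply Fiff_eq in A1; [|exact HM].
      rewrite <- (hrepl M h Hh a b A1 c c' H1). exact A2.
  - destruct IHderivable as [L [GL S]]. exists L. split; [exact GL|].
    intros M HM Has h Hh HL. specialize (S M HM Has h Hh HL).
    rewrite hO in S by exact Hh. apply Fot in S; [|exact HM]. apply S.
  - destruct IHderivable as [L [GL S]]. exists L. split; [exact GL|].
    intros M HM Has h Hh HL. specialize (S M HM Has h Hh HL).
    rewrite hOplus by exact Hh. apply HM. exact S.
  - destruct IHderivable1 as [L1 [G1 S1]], IHderivable2 as [L2 [G2 S2]].
    exists (L1 ++ L2). split.
    + intros x Hx. apply in_app_or in Hx. destruct Hx; auto.
    + intros M HM Has h Hh HL.
      assert (A1 := S1 M HM Has h Hh (fun x Hx => HL x (in_or_app _ _ _ (or_introl Hx)))).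
      assert (A2 := S2 M HM Has h Hh (fun x Hx => HL x (in_or_app _ _ _ (or_intror Hx)))).
      rewrite hImp in * by exact Hh. apply FImp in A1, A2; try exact HM. apply FImp; [exact HM|].
      destruct (HM) as [_ [_ Ht]]. exact (Ht _ _ _ A1 A2).
  - nil_start. rewrite hImp, !hO by exact Hh. apply FImp; [exact HM|]. rewrite (Has H). apply Frefl, HM.
  - nil_start. rewrite hImp, !hO by exact Hh. apply FImp; [exact HM|]. rewrite (Has H). apply Frefl, HM.
Qed.

Theorem theorem6p2 : forall (G : fm -> Prop) (phi : fm),
  (derivable false G phi <-> consequence Nw1_model G phi) /\
  (derivable true G phi <-> consequence N1_model G phi).
Proof.
  intros G phi. split; split.
  - intro H. destruct (sound _ _ _ H) as [L [GL S]]. exists L. split; [exact GL|].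
    intros M HM h Hh HL. apply (S M HM); auto. discriminate.
  - intros [L [GL S]].
    apply (LM_F false G phi). apply (S (LM false G) (LM_Nw1 false G) _ (LM_hom false G)).
    intros a Ha. apply LM_F. apply d_hyp. auto.
  - intro H. destruct (sound _ _ _ H) as [L [GL S]]. exists L. split; [exact GL|].
    intros M [HM [_ HA]] h Hh HL. apply (S M HM); auto.
  - intros [L [GL S]].
    apply (LM_F true G phi). apply (S (LM true G) (LM_N1 true G eq_refl) _ (LM_hom true G)).
    intros a Ha. apply LM_F. apply d_hyp. auto.
Qed.
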